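(* Let $N_q\ge 1$ and let $\{s_{t,j}\}$, $1\le t\le N_q$, $1\le j\le n$, be real numbers. For each $j$ define $a_j := \max_{1\le t\le N_q} s_{t,j}$ and $g_j := \log\sum_{t=1}^{N_q}\exp(s_{t,j})$. Let $a_{(1)}\ge a_{(2)}\ge \dots \ge a_{(n)}$ be the values $\{a_j\}$ sorted in non-increasing order, and let $1\le K<n$. If $a_{(K)} - a_{(K+1)} > \log N_q$, then the set of $K$ indices $j$ with the largest values of $a_j$ is identical to the set of $K$ indices $j$ with the largest values of $g_j$.
   Context: In the paper's setting, $s_{t,j}$ is the cosine similarity between query-token hidden state $h_t$ and visual token embedding $v_j$; $a_j$ is the max-similarity pruning score and $g_j$ the log-sum-exp (smooth attention-style pooling) score of visual token $j$. *)

(* Defs.v *)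
From HB Require Import structures.
From mathcomp Require Import all_boot all_order all_algebra.
From mathcomp Require Import all_classical all_reals all_analysis.
Set Implicit Arguments. Unset Strict Implicit. Unset Printing Implicit Defensive.
Import Order.TTheory GRing.Theory Num.Theory.
Local Open Scope ring_scope.

(* a_j := max_{t} s_{t,j}: the maximum is computed in the extended reals
   (with -oo as neutral element) and brought back to R with [fine];
   for Nq >= 1 this is exactly the (finite) maximum. *)
Definition maxsim (R : realType) (Nq n : nat) (s : 'I_Nq -> 'I_n -> R)
  (j : 'I_n) : R :=
  fine (\big[Order.max/-oo%E]_(t < Nq) ((s t j)%:E)).

Definition lsescore (R : realType) (Nq n : nat) (s : 'I_Nq -> 'I_n -> R)
  (j : 'I_n) : R :=
  ln (\sum_(t < Nq) expR (s t j)).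

Definition sorted_desc (R : realType) (n : nat) (f : 'I_n -> R) : seq R :=
  sort (fun x y : R => y <= x) [seq f j | j <- enum 'I_n].

Definition topK (R : realType) (n : nat) (f : 'I_n -> R) (K : nat)
  (S : {set 'I_n}) : Prop :=
  #|S| = K /\ (forall i j, i \in S -> j \notin S -> f j <= f i).

(* Main.v *)
Require Import Defs.
From HB Require Import structures.
From mathcomp Require Import all_boot all_order all_algebra.
From mathcomp Require Import all_classical all_reals all_analysis.
Import Order.TTheory GRing.Theory Num.Theory.
Local Open Scope ring_scope.

Section S.
Variables (R : realType) (Nq n : nat) (s : 'I_Nq -> 'I_n -> R).
Hypothesis hN : (1 <= Nq)%N.

Lemma maxsim_big j : exists t, \big[Order.max/-oo%E]_(t < Nq) ((s t j)%:E) = (s t j)%:E.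
Proof.
have : (\big[Order.max/-oo%E]_(t < Nq) ((s t j)%:E) = -oo%E \/ exists t, \big[Order.max/-oo%E]_(t < Nq) ((s t j)%:E) = (s t j)%:E).
  apply: (big_ind (fun x => x = -oo%E \/ exists t, x = (s t j)%:E)); first by left.
    move=> x y hx hy; rewrite /Order.max; by case: ifP.
  by move=> i _; right; exists i.
case=> [h|//].
have := le_bigmax_seq (-oo)%E (Ordinal hN) xpredT (fun t => (s t j)%:E) (mem_index_enum _) erefl.
by rewrite /index_enum /= h.
Qed.

Lemma maxsim_ex j : exists t, maxsim s j = s t j.
Proof. by have [t ht] := maxsim_big j; exists t; rewrite /maxsim ht. Qed.

Lemma maxsim_ub j t : s t j <= maxsim s j.
Proof.
have := le_bigmax_seq (-oo)%E t xpredT (fun t => (s t j)%:E) (mem_index_enum t) erefl.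
have [t' ht'] := maxsim_big j.
by rewrite /maxsim /index_enum /= ht' lee_fin.
Qed.

Lemma lse_bounds j : maxsim s j <= lsescore s j <= maxsim s j + ln (Nq%:R).
Proof.
have [t ht] := maxsim_ex j.
have Nq0 : (0 : R) < Nq%:R by rewrite ltr0n.
have sum_ge : expR (s t j) <= \sum_(u < Nq) expR (s u j).
  by rewrite (bigD1 t) //= lerDl sumr_ge0 // => i _; exact: expR_ge0.
have sum_le : \sum_(u < Nq) expR (s u j) <= Nq%:R * expR (s t j).
  apply: (@le_trans _ _ (\sum_(u < Nq) expR (s t j))); last first.
    by rewrite sumr_const card_ord mulr_natl.
  apply: ler_sum => u _. rewrite ler_expR -ht. exact: maxsim_ub.
have spos : 0 < \sum_(u < Nq) expR (s u j) by apply: lt_le_trans sum_ge; exact: expR_gt0.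
rewrite /lsescore ht; apply/andP; split.
  by rewrite -ler_expR lnK // posrE.
have -> : s t j + ln (Nq%:R) = ln (Nq%:R * expR (s t j)).
  by rewrite lnM ?posrE ?expR_gt0 // expRK addrC.
by rewrite ler_ln ?posrE ?mulr_gt0 ?expR_gt0.
Qed.
End S.
Section Sort.
Variables (R : realType) (n : nat) (f : 'I_n -> R) (K : nat).
Hypotheses (hK : (1 <= K)%N) (hKn : (K < n)%N).
Let L := sorted_desc f.
Let A := nth 0 L K.-1.
Let B := nth 0 L K.
Hypothesis hAB : B < A.

Lemma sizeL : size L = n.
Proof. by rewrite /L /sorted_desc size_sort size_map size_enum_ord. Qed.

Lemma monoL i j : (i <= j)%N -> (j < n)%N -> nth 0 L j <= nth 0 L i.
Proof.
move=> hij hj.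
have hs : sorted (fun x y : R => y <= x) L.
  by apply: sort_sorted => x y; exact: le_total.
have := @sorted_leq_nth _ (fun x y : R => y <= x) _ _ 0 L hs i j.
apply; rewrite ?inE ?sizeL //; [ | exact: (leq_ltn_trans hij hj)].
- by move=> x y z /= h1 h2; exact: le_trans h2 h1.
Qed.

Lemma memL j : f j \in L.
Proof. by rewrite /L /sorted_desc mem_sort map_f // mem_enum. Qed.

Lemma outside j : f j < A -> f j <= B.
Proof.
move=> hj.
have hm : (index (f j) L < n)%N by rewrite -sizeL index_mem memL.
have e := nth_index 0 (memL j).
have [hlt|hge] := ltnP (index (f j) L) K.
  have := @monoL (index (f j) L) K.-1 _ (leq_ltn_trans (leq_pred K) hKn).
  rewrite e -/A => h; have : A <= f j.
    apply: h; by rewrite -ltnS (ltn_predK hK).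
  by rewrite leNgt hj.
by rewrite -e; apply: monoL.
Qed.

Lemma cardT : #|[set j | A <= f j]| = K.
Proof.
rewrite cardE /enum_mem size_filter /=.
rewrite (eq_count (a2 := preim f (fun x => A <= x))); last by move=> j; rewrite /= inE.
rewrite -count_map.
have -> : count (fun x => A <= x) [seq f i | i <- Finite.enum 'I_n] = count (fun x => A <= x) L.
  apply: (permP _). rewrite /L /sorted_desc perm_sym perm_sort.
  by rewrite enumT.
have hsz : size (take K L) = K by rewrite size_takel // sizeL ltnW.
rewrite -(cat_take_drop K L) count_cat.
rewrite (eq_in_count (a2 := predT)); last first.
  move=> x /(nthP 0) [i hi <-]; rewrite nth_take; last by move: hi; rewrite hsz.
  suff h : A <= nth 0 L i by rewrite /= h.
  apply: monoL; last exact: (leq_ltn_trans (leq_pred K) hKn).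
  by rewrite -ltnS (ltn_predK hK); move: hi; rewrite hsz.
rewrite (eq_in_count (a2 := pred0) (s := drop K L)); last first.
  move=> x /(nthP 0) [i hi <-]; rewrite nth_drop /=.
  move: hi; rewrite size_drop sizeL => hi.
  apply/negbTE; rewrite -ltNge; apply: le_lt_trans hAB.
  by apply: monoL; rewrite ?leq_addr // -ltn_subRL.
by rewrite count_predT count_pred0 addn0.
Qed.
End Sort.

Lemma topK_uniq (R : realType) (n : nat) (f : 'I_n -> R) (K : nat) (T S : {set 'I_n}) :
  #|T| = K -> (forall i j, i \in T -> j \notin T -> f j < f i) ->
  topK f K S -> S = T.
Proof.
move=> cT sep [cS hS].
have TS : T \subset S.
  apply/fintype.subsetP => j jT; apply/negPn/negP => jS.
  have nST : ~~ (S \subset T).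
    apply/negP => /(subset_cardP (etrans cS (esym cT))) eq.
    by move: jS; rewrite eq jT.
  have [i iS iT] := fintype.subsetPn nST.
  have := hS i j iS jS; have := sep j i jT iT.
  by rewrite leNgt => ->.
by apply/setP => x; apply/esym; apply: (subset_cardP (etrans cT (esym cS)) TS).
Qed.

Lemma topK_of_sep (R : realType) (n : nat) (f : 'I_n -> R) (K : nat) (T : {set 'I_n}) :
  #|T| = K -> (forall i j, i \in T -> j \notin T -> f j < f i) -> topK f K T.
Proof. by move=> cT sep; split => // i j iT jT; apply/ltW/sep. Qed.


Theorem corollaryA2 (R : realType) (Nq n : nat) (s : 'I_Nq -> 'I_n -> R)
  (K : nat) :
  (1 <= Nq)%N -> (1 <= K)%N -> (K < n)%N ->
  nth 0 (sorted_desc (maxsim s)) K.-1 - nth 0 (sorted_desc (maxsim s)) K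
    > ln (Nq%:R : R) ->
  forall S : {set 'I_n}, topK (maxsim s) K S <-> topK (lsescore s) K S.
Proof.
move=> hN hK hKn hgap S.
set A := nth 0 (sorted_desc (maxsim s)) K.-1 in hgap.
set B := nth 0 (sorted_desc (maxsim s)) K in hgap.
have ln0 : 0 <= ln (Nq%:R : R) by apply: ln_ge0; rewrite ler1n.
have hAB : B < A by rewrite -subr_gt0; exact: le_lt_trans hgap.
have cT := @cardT R n (maxsim s) K hK hKn hAB.
set T := [set j | A <= maxsim s j] in cT.
have sepA : forall i j, i \in T -> j \notin T -> maxsim s j < maxsim s i.
  move=> i j; rewrite !inE -ltNge => hi hj.
  by apply: le_lt_trans (lt_le_trans hAB hi); apply: outside.
have sepG : forall i j, i \in T -> j \notin T -> lsescore s j < lsescore s i.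
  move=> i j; rewrite !inE -ltNge => hi hj.
  have /andP[_ gj] := @lse_bounds R Nq n s hN j.
  have /andP[gi _] := @lse_bounds R Nq n s hN i.
  apply: le_lt_trans gj _; apply: lt_le_trans gi.
  apply: lt_le_trans hi.
  have := @outside R n (maxsim s) K hK hKn j hj; rewrite -/B => hb.
  have e : B + (A - B) = A by rewrite addrC subrK.
  by rewrite -[X in _ < X]e; apply: ler_ltD.
split => h.
  by rewrite (@topK_uniq _ _ _ _ _ _ cT sepA h); exact: (@topK_of_sep _ _ _ _ _ cT sepG).
by rewrite (@topK_uniq _ _ _ _ _ _ cT sepG h); exact: (@topK_of_sep _ _ _ _ _ cT sepA).
Qed.
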